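(* Let $M$ be a matroid on $E$ whose dual is transversal with presentation $\mathcal A=(A_1,\ldots,A_r)$, $r=r^*(M)$; let $e\in E$ and let $G$ be a minimal $(e,\mathcal A)$-presenting graph on vertex set $\mathcal A_e(E)$ for which the identity map is the presenting map. Let $i\in[r]$ and $\mathcal A'=(A_1,\ldots,A_{i-1},\mathrm{cl}_M(A_i),A_{i+1},\ldots,A_r)$. Define a graph $G'$ by: (i) if $e\notin\mathrm{cl}_M(A_i)-A_i$, then $G'=G$; (ii) if $e\in\mathrm{cl}_M(A_i)-A_i$, then $G'$ is obtained from $G$ by adding a vertex $i$ and an edge from $i$ to exactly one $j\in\mathcal A_e(\mathrm{cl}_M(A_i))$. Then $G'$ is a minimal $(e,\mathcal A')$-presenting graph (with the identity map as presenting map).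
   Context: $M^*=M[\mathcal A]$, the transversal matroid whose independent sets are the partial transversals of $\mathcal A$. For any sequence $\mathcal B=(B_1,\ldots,B_r)$ of subsets of $E$ and $X\subseteq E$: $\mathcal B(X)=\{i:B_i\subseteq X\}$, $\mathcal B_e(X)=\{i\in\mathcal B(X): e\in B_i\}$. For $U$ a vertex subset, $G[U]$ is the induced subgraph. A graph $H$ with vertex set $\mathcal B_e(E)$ is $(e,\mathcal B)$-presenting if for all distinct $i,j\in\mathcal B_e(E)$ the graph $H[\mathcal B_e(\mathrm{cl}_M(B_i\cup B_j))]$ is connected (closures taken in $M$); it is minimal if deleting any one edge yields a graph that is not $(e,\mathcal B)$-presenting. *)

(* Defs.v *)
From mathcomp Require Import all_boot.
Set Implicit Arguments. Unset Strict Implicit. Unset Printing Implicit Defensive.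

Record matroid (E : finType) := Matroid {
  indep : {set E} -> bool;
  indep0 : indep set0;
  indep_sub : forall I J : {set E}, J \subset I -> indep I -> indep J;
  indep_aug : forall I J : {set E}, indep I -> indep J -> #|I| < #|J| ->
     exists2 x, x \in J :\: I & indep (x |: I)
}.

Section MatroidDefs.
Variable E : finType.
Variable M : matroid E.

Definition mrank (X : {set E}) : nat :=
  \max_(I : {set E} | indep M I && (I \subset X)) #|I|.

Definition mcl (X : {set E}) : {set E} :=
  [set x | mrank (x |: X) == mrank X].

Definition mbasis (B : {set E}) : bool :=
  indep M B && [forall x, (x \notin B) ==> ~~ indep M (x |: B)].

Definition dual_indep (I : {set E}) : bool :=
  [exists B : {set E}, mbasis B && [disjoint I & B]].

Definition dual_rank : nat :=
  \max_(I : {set E} | dual_indep I) #|I|.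
End MatroidDefs.

Section Transversal.
Variables (E : finType) (r : nat).

Definition partial_transversal (A : 'I_r -> {set E}) (I : {set E}) : Prop :=
  exists f : E -> 'I_r, {in I &, injective f} /\ forall x, x \in I -> x \in A (f x).

(* B(X) = {i : B_i ⊆ X} ;  B_e(X) = {i ∈ B(X) : e ∈ B_i} *)
Definition idx_sub (B : 'I_r -> {set E}) (X : {set E}) : {set 'I_r} :=
  [set i | B i \subset X].
Definition idx_sub_e (B : 'I_r -> {set E}) (e : E) (X : {set E}) : {set 'I_r} :=
  [set i | (B i \subset X) && (e \in B i)].

(* Simple graphs on vertices drawn from 'I_r: a set of edges, each edge being
   a 2-element set of vertices; the vertex set is given separately. *)
Definition is_graph_on (V : {set 'I_r}) (Ed : {set {set 'I_r}}) : Prop :=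
  forall ed, ed \in Ed -> exists x y, [/\ x != y, x \in V, y \in V & ed = [set x; y]].

Definition induced_connected (Ed : {set {set 'I_r}}) (U : {set 'I_r}) : Prop :=
  forall u v, u \in U -> v \in U ->
    connect (fun x y => [&& x \in U, y \in U & [set x; y] \in Ed]) u v.

Variable M : matroid E.

Definition presenting (e : E) (B : 'I_r -> {set E}) (Ed : {set {set 'I_r}}) : Prop :=
  is_graph_on (idx_sub_e B e setT) Ed /\
  forall i j, i \in idx_sub_e B e setT -> j \in idx_sub_e B e setT -> i != j ->
    induced_connected Ed (idx_sub_e B e (mcl M (B i :|: B j))).

Definition minimal_presenting (e : E) (B : 'I_r -> {set E}) (Ed : {set {set 'I_r}}) : Prop :=
  presenting e B Ed /\ forall ed, ed \in Ed -> ~ presenting e B (Ed :\ ed).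
End Transversal.

(* Main.v *)
Require Import Defs.
From mathcomp Require Import all_boot.
Set Implicit Arguments. Unset Strict Implicit. Unset Printing Implicit Defensive.

Section Mat.
Variables (E : finType) (M : matroid E).

Lemma rank_ge (I X : {set E}) : indep M I -> I \subset X -> #|I| <= mrank M X.
Proof. move=> hI hIX; rewrite /mrank; by apply: (@leq_bigmax_cond _ (fun J : {set E} => indep M J && (J \subset X)) (fun J => #|J|)); rewrite hI hIX. Qed.

Lemma rank_wit (X : {set E}) : exists2 I, indep M I && (I \subset X) & #|I| = mrank M X.
Proof.
have hP : 0 < #|[pred I : {set E} | indep M I && (I \subset X)]|.
  by apply/card_gt0P; exists set0; rewrite inE indep0 sub0set.
case: (eq_bigmax_cond (fun I : {set E} => #|I|) hP) => I hI hmax.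
exists I; first by move: hI; rewrite inE.
by rewrite /mrank -hmax.
Qed.

Lemma rank_mono (X Y : {set E}) : X \subset Y -> mrank M X <= mrank M Y.
Proof.
move=> sXY; case: (rank_wit X) => I /andP[hI sIX] <-.
exact: rank_ge hI (subset_trans sIX sXY).
Qed.

Lemma extend (I Y : {set E}) : indep M I -> I \subset Y ->
  exists K, [/\ indep M K, I \subset K, K \subset Y & #|K| = mrank M Y].
Proof.
case: (rank_wit Y) => J /andP[hJ sJY] hJc.
suff: forall n (I : {set E}), mrank M Y - #|I| <= n -> indep M I -> I \subset Y ->
  exists K, [/\ indep M K, I \subset K, K \subset Y & #|K| = mrank M Y].
  by move=> h hI sIY; exact: (h _ I (leqnn _) hI sIY).
elim=> [|n IH] I0 hn hI sIY.
  exists I0; split => //; apply/eqP; rewrite eqn_leq rank_ge //=.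
  by move: hn; rewrite leqn0 subn_eq0.
case: (ltnP #|I0| #|J|) => hlt.
  case: (indep_aug hI hJ hlt) => x; rewrite in_setD => /andP[xI xJ] hx.
  case: (IH (x |: I0)) => //.
  - by rewrite cardsU1 xI subnS; move: hn; case: (_ - _).
  - by rewrite subUset sub1set (subsetP sJY) ?xJ.
  move=> K [hK sK sKY hKc]; exists K; split => //.
  by apply: subset_trans sK; exact: subsetUr.
exists I0; split => //; apply/eqP; rewrite eqn_leq rank_ge //= -hJc //.
Qed.

Lemma cl_ext (X : {set E}) : X \subset mcl M X.
Proof.
apply/subsetP=> x xX; rewrite inE.
have -> : x |: X = X by apply/setUidPr; rewrite sub1set.
by [].
Qed.

Lemma cl_mono (X Y : {set E}) : X \subset Y -> mcl M X \subset mcl M Y.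
Proof.
move=> sXY; apply/subsetP=> x; rewrite !inE => /eqP hx.
rewrite eqn_leq (rank_mono (subsetUr _ _)) andbT.
rewrite leqNgt; apply/negP => hlt.
case: (rank_wit X) => I /andP[hI sIX] hIc.
case: (extend hI (subset_trans sIX sXY)) => K [hK sIK sKY hKc].
case: (rank_wit (x |: Y)) => J /andP[hJ sJY] hJc.
have hKJ : #|K| < #|J| by rewrite hKc hJc.
case: (indep_aug hK hJ hKJ) => z; rewrite in_setD => /andP[zK zJ] hz.
have := subsetP sJY z zJ; rewrite in_setU1 => /orP[/eqP zx|zY].
  subst z.
  have xI : x \notin I by apply: contra zK; exact: (subsetP sIK).
  have hxI : indep M (x |: I) by apply: indep_sub hz; exact: setUS.
  have := rank_ge hxI (setUS _ sIX); rewrite hx cardsU1 xI hIc.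
  by rewrite ltnn.
have sKz : z |: K \subset Y by rewrite subUset sub1set zY.
have := rank_ge hz sKz.
by rewrite cardsU1 zK hKc ltnn.
Qed.

Lemma rank_cl (X : {set E}) : mrank M (mcl M X) = mrank M X.
Proof.
apply/eqP; rewrite eqn_leq (rank_mono (cl_ext X)) andbT.
rewrite leqNgt; apply/negP => hlt.
case: (rank_wit X) => I /andP[hI sIX] hIc.
case: (extend hI (subset_trans sIX (cl_ext X))) => K [hK sIK sKY hKc].
have : ~~ (K \subset I).
  apply/negP => sKI; have := subset_leq_card sKI.
  by rewrite hKc hIc leqNgt hlt.
case/subsetPn => z zK zI.
have hz : indep M (z |: I) by apply: indep_sub hK; rewrite subUset sub1set zK.
have := rank_ge hz (setUS [set z] sIX).
have := subsetP sKY z zK; rewrite inE => /eqP ->.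
by rewrite cardsU1 zI hIc ltnn.
Qed.

Lemma cl_idem (X : {set E}) : mcl M (mcl M X) \subset mcl M X.
Proof.
apply/subsetP=> x; rewrite !inE rank_cl => /eqP hx.
rewrite eqn_leq (rank_mono (subsetUr _ _)) andbT -hx.
by apply: rank_mono; apply: setUS; exact: cl_ext.
Qed.

Lemma cl_sub_closed (X F : {set E}) : X \subset F -> mcl M F \subset F -> mcl M X \subset F.
Proof. by move=> sXF cF; apply: subset_trans cF; exact: cl_mono. Qed.

Lemma cl_eq (X Y : {set E}) : X \subset Y -> Y \subset mcl M X -> mcl M Y = mcl M X.
Proof.
move=> sXY sYX; apply/eqP; rewrite eqEsubset (cl_mono sXY) andbT.
exact: cl_sub_closed sYX (cl_idem X).
Qed.
End Mat.

Lemma connect_map (T : finType) (e e' : rel T) (f : T -> T) :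
  (forall x y, e x y -> f x = f y \/ e' (f x) (f y)) ->
  forall x y, connect e x y -> connect e' (f x) (f y).
Proof.
move=> h x y /connectP [p pth ->]; elim: p x pth => [|z p IH] x /=.
  by move=> _; exact: connect0.
case/andP=> exz pth; apply: connect_trans (IH _ pth).
by case: (h _ _ exz) => [->|?]; [exact: connect0 | exact: connect1].
Qed.

Definition irel (r : nat) (Ed : {set {set 'I_r}}) (U : {set 'I_r}) : rel 'I_r :=
  fun x y => [&& x \in U, y \in U & [set x; y] \in Ed].

Lemma ic_mono (r : nat) (Ed Ed' : {set {set 'I_r}}) (U U' : {set 'I_r}) u v :
  Ed \subset Ed' -> U \subset U' -> connect (irel Ed U) u v -> connect (irel Ed' U') u v.
Proof.
move=> sE sU; apply: (@connect_map _ _ _ id) => x y /and3P[xU yU xy]; right.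
by rewrite /irel /= (subsetP sU _ xU) (subsetP sU _ yU) (subsetP sE _ xy).
Qed.

Theorem lemma3p6 (E : finType) (M : matroid E) (r : nat) (A : 'I_r -> {set E})
  (hr : r = dual_rank M)
  (hA : forall I : {set E}, dual_indep M I <-> partial_transversal A I)
  (e : E) (G : {set {set 'I_r}})
  (hG : minimal_presenting M e A G)
  (i : 'I_r) :
  let A' := fun k : 'I_r => if k == i then mcl M (A i) else A k in
  (e \notin mcl M (A i) :\: A i -> minimal_presenting M e A' G) /\
  (e \in mcl M (A i) :\: A i ->
     forall j, j \in idx_sub_e A e (mcl M (A i)) ->
       minimal_presenting M e A' (G :|: [set [set i; j]])).
Proof.
move=> A'.
have hAA k : A k \subset A' k.
  by rewrite /A'; case: eqP => [->|_] //; exact: cl_ext.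
have hA'k k : A' k \subset mcl M (A k).
  by rewrite /A'; case: eqP => [->|_] //; exact: cl_ext.
have hcl k l : mcl M (A' k :|: A' l) = mcl M (A k :|: A l).
  apply: cl_eq; first exact: setUSS.
  rewrite subUset; apply/andP; split.
    by apply: subset_trans (hA'k k) _; apply: cl_mono; exact: subsetUl.
  by apply: subset_trans (hA'k l) _; apply: cl_mono; exact: subsetUr.
case: hG => [[hgr hcon] hmin].
have flat F : mcl M F \subset F -> induced_connected G (idx_sub_e A e F).
  move=> hF u v; rewrite !inE => /andP[uF eu] /andP[vF ev].
  case: (eqVneq u v) => [->|neq]; first exact: connect0.
  have hu : u \in idx_sub_e A e (mcl M (A u :|: A v)).
    by rewrite inE eu andbT; apply: (subset_trans (subsetUl _ (A v))); exact: cl_ext.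
  have hv : v \in idx_sub_e A e (mcl M (A u :|: A v)).
    by rewrite inE ev andbT; apply: (subset_trans (subsetUr (A u) _)); exact: cl_ext.
  have uV : u \in idx_sub_e A e setT by rewrite inE subsetT eu.
  have vV : v \in idx_sub_e A e setT by rewrite inE subsetT ev.
  have := hcon u v uV vV neq u v hu hv.
  apply: ic_mono => //.
  apply/subsetP => w; rewrite !inE => /andP[wX ->]; rewrite andbT.
  apply: subset_trans wX _; apply: cl_sub_closed hF.
  by rewrite subUset uF vF.
split.
- move=> he.
  have heA : (e \in mcl M (A i)) = (e \in A i).
    case h: (e \in A i); first by rewrite (subsetP (cl_ext _ _)).
    by apply/negbTE; move: he; rewrite in_setD h.
  have hidx F : mcl M F \subset F -> idx_sub_e A' e F = idx_sub_e A e F.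
    move=> cF; apply/setP=> k; rewrite !inE /A'; case: eqP => [->|_] //.
    rewrite heA; congr (_ && _); apply/idP/idP.
      by apply: subset_trans; exact: cl_ext.
    by move=> h; exact: cl_sub_closed h cF.
  have hV : idx_sub_e A' e setT = idx_sub_e A e setT by apply: hidx; exact: subsetT.
  have hP Ed : presenting M e A' Ed <-> presenting M e A Ed.
    rewrite /presenting hV; split => -[g c]; split => // k l hk hl hkl.
      by have := c k l hk hl hkl; rewrite hcl hidx //; exact: cl_idem.
    by rewrite hcl hidx; [exact: c | exact: cl_idem].
  split; first by apply/hP.
  by move=> ed hed /hP; exact: hmin.
- move=> he j hj.
  move: he; rewrite in_setD => /andP[heAi he_cl].
  move: hj; rewrite inE => /andP[hjs ej].
  have hji : j != i by apply/eqP => eq; rewrite -eq ej in heAi.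
  have niV X k : k \in idx_sub_e A e X -> k != i.
    by rewrite inE => /andP[_ ek]; apply/eqP => eq; rewrite -eq ek in heAi.
  have hV' k : (k \in idx_sub_e A' e setT) = (k == i) || (k \in idx_sub_e A e setT).
    by rewrite !inE /A'; case: eqP => [->|_]; rewrite ?subsetT ?he_cl.
  have hU X k : k != i -> (k \in idx_sub_e A' e X) = (k \in idx_sub_e A e X).
    by move=> hk; rewrite !inE /A' (negbTE hk).
  have hA'i : A' i = mcl M (A i) by rewrite /A' eqxx.
  have hA'j : A' j = A j by rewrite /A' (negbTE hji).
  have edG ed : ed \in G -> i \notin ed.
    move/hgr => [x [y [_ xV yV ->]]]; rewrite in_set2 negb_or.
    by rewrite eq_sym (niV _ _ xV) eq_sym (niV _ _ yV).
  have jV : j \in idx_sub_e A e setT by rewrite inE subsetT ej.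
  set G' := G :|: [set [set i; j]].
  have ijG' : [set i; j] \in G' by rewrite in_setU set11 orbT.
  have pres : presenting M e A' G'.
    split.
    + move=> ed; rewrite in_setU in_set1 => /orP[/hgr [x [y [xy xV yV ->]]]|/eqP ->].
        by exists x, y; split => //; rewrite hV' ?xV ?yV orbT.
      by exists i, j; split => //; rewrite ?hV' ?eqxx ?jV ?orbT // eq_sym.
    + move=> k l hk hl hkl; rewrite hcl.
      set X := mcl M (A k :|: A l).
      have cX : mcl M X \subset X by exact: cl_idem.
      have fl := flat X cX.
      have sub w : w \in idx_sub_e A e X -> w \in idx_sub_e A' e X.
        by move=> hw; rewrite hU ?(niV _ _ hw).
      have lift u v : u \in idx_sub_e A e X -> v \in idx_sub_e A e X ->
          connect (irel G' (idx_sub_e A' e X)) u v.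
        move=> hu hv; apply: ic_mono (fl u v hu hv); first exact: subsetUl.
        by apply/subsetP => w; exact: sub.
      have jX : i \in idx_sub_e A' e X -> j \in idx_sub_e A e X.
        rewrite inE hA'i => /andP[sX _]; rewrite inE ej andbT.
        exact: subset_trans hjs sX.
      move=> u v hu hv.
      case: (eqVneq u i) => [ui|ui]; case: (eqVneq v i) => [vi|vi].
      * by rewrite ui vi; exact: connect0.
      * have hiX : i \in idx_sub_e A' e X by rewrite -ui.
        rewrite ui; apply: connect_trans (lift j v (jX hiX) _); last by rewrite -hU.
        by apply: connect1; rewrite /irel /= hiX sub ?jX.
      * have hiX : i \in idx_sub_e A' e X by rewrite -vi.
        rewrite vi; apply: connect_trans (lift u j _ (jX hiX)) _; first by rewrite -hU.
        apply: connect1; rewrite /irel /= hiX sub ?jX //=.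
        by rewrite setUC.
      * by apply: lift; rewrite -hU.
  split; first exact: pres.
  move=> ed; rewrite in_setU in_set1 => /orP[edinG|/eqP edij] hp.
  + apply: (hmin ed edinG); case: hp => [g' c']; split.
      by move=> f; rewrite in_setD1 => /andP[_ /hgr].
    move=> k l hk hl hkl.
    have hk' : k \in idx_sub_e A' e setT by rewrite hV' hk orbT.
    have hl' : l \in idx_sub_e A' e setT by rewrite hV' hl orbT.
    have := c' k l hk' hl' hkl; rewrite hcl.
    set X := mcl M (A k :|: A l) => C u v hu hv.
    have hu' : u \in idx_sub_e A' e X by rewrite hU ?(niV _ _ hu).
    have hv' : v \in idx_sub_e A' e X by rewrite hU ?(niV _ _ hv).
    have := C u v hu' hv'.
    pose f w := if w == i then j else w.
    have fij w : w \in [set i; j] -> f w = j.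
      by rewrite in_set2 /f => /orP[/eqP ->|/eqP ->]; rewrite ?eqxx // (negbTE hji).
    have fn w : w != i -> f w = w by move=> hw; rewrite /f (negbTE hw).
    move/(@connect_map _ _ (irel (G :\ ed) (idx_sub_e A e X)) f).
    rewrite !fn ?(niV _ _ hu) ?(niV _ _ hv) //; apply.
    move=> x y /and3P[xU yU]; rewrite in_setD1 in_setU in_set1.
    case/andP=> xyed /orP[xyG|/eqP xyij].
      have := edG _ xyG; rewrite in_set2 negb_or => /andP[xi yi].
      rewrite eq_sym in xi; rewrite eq_sym in yi.
      right; rewrite !fn // /irel /= -!hU // in_setD1 xyed xyG.
      by rewrite xU yU.
    left; rewrite !fij // -xyij in_set2 eqxx ?orbT //.
  + subst ed.
    have hi' : i \in idx_sub_e A' e setT by rewrite hV' eqxx.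
    have hj' : j \in idx_sub_e A' e setT by rewrite hV' jV orbT.
    case: hp => _ c'.
    have hij : i != j by rewrite eq_sym.
    have := c' i j hi' hj' hij.
    move=> C.
    have hiU : i \in idx_sub_e A' e (mcl M (A' i :|: A' j)).
      rewrite inE hA'i he_cl andbT -hA'i.
      by exact: subset_trans (subsetUl _ _) (cl_ext _ _).
    have hjU : j \in idx_sub_e A' e (mcl M (A' i :|: A' j)).
      rewrite inE hA'j ej andbT -hA'j.
      by exact: subset_trans (subsetUr _ _) (cl_ext _ _).
    have /connectP [[|z p] pth jl] := C i j hiU hjU.
      by move: hji; rewrite jl eqxx.
    move: pth => /= /andP[/and3P[_ _]] + _.
    rewrite in_setD1 in_setU in_set1 => /andP[nij /orP[izG|/eqP iz]].
      by have := edG _ izG; rewrite in_set2 eqxx.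
    by rewrite iz eqxx in nij.
Qed.
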